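(* Let $S$ be an MLD-set of a graph $G$, and let $u\in S$ and $x\in V(G)\setminus S$ be such that the pair $\{u,x\}$ is not doubly resolved by $S$. Then $N(x)\cap S=\{u\}$, and $x$ is the only vertex $x'\in V(G)\setminus S$ such that $\{u,x'\}$ is not doubly resolved by $S$.
   Context: All graphs are finite, simple, undirected and connected; $d(u,v)$ is the shortest-path distance and $N(x)$ the open neighborhood of $x$. A set $S\subseteq V(G)$ is resolving if for all distinct $x,y\in V(G)$ there is $u\in S$ with $d(u,x)\ne d(u,y)$; dominating if every vertex not in $S$ has a neighbor in $S$. An MLD-set is a set both resolving and dominating. Two vertices $u,v$ doubly resolve a pair $\{x,y\}$ if $d(u,x)-d(u,y)\ne d(v,x)-d(v,y)$; a set $S$ doubly resolves $\{x,y\}$ if some two vertices of $S$ doubly resolve it. *)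

(* Defs.v *)
From mathcomp Require Import all_boot all_order all_algebra.
Import GRing.Theory.
Set Implicit Arguments. Unset Strict Implicit. Unset Printing Implicit Defensive.

Section Graph.
Variable T : finType.
Variable e : rel T.

Definition simple_graph : Prop := symmetric e /\ irreflexive e.
Definition connected_graph : Prop := forall x y : T, connect e x y.

Definition nbhd (x : T) : {set T} := [set y | e x y].

Fixpoint ball (u : T) (n : nat) : {set T} :=
  match n with
  | 0 => [set u]
  | n'.+1 => ball u n' :|: [set y | [exists z in ball u n', e z y]]
  end.

(* shortest-path distance: least n with v in ball u n
   (every distance in a connected graph on T is < #|T|) *)
Definition dist (u v : T) : nat := find (fun n => v \in ball u n) (iota 0 #|T|).

Definition resolving (S : {set T}) : Prop :=
  forall x y : T, x != y -> exists2 u, u \in S & dist u x != dist u y.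

Definition dominating (S : {set T}) : Prop :=
  forall x : T, x \notin S -> exists2 y, y \in S & e x y.

Definition MLD_set (S : {set T}) : Prop := resolving S /\ dominating S.

Definition doubly_resolves (u v x y : T) : Prop :=
  (Posz (dist u x) - Posz (dist u y) != Posz (dist v x) - Posz (dist v y))%R.

Definition set_doubly_resolves (S : {set T}) (x y : T) : Prop :=
  exists u v, [/\ u \in S, v \in S & doubly_resolves u v x y].
End Graph.

(* Main.v *)
Require Import Defs.
From mathcomp Require Import all_boot all_order all_algebra.
From mathcomp Require Import zify.

Section L.
Variable T : finType.
Variable e : rel T.

Lemma card_pos (u : T) : exists n, #|T| = n.+1.
Proof. have : 0 < #|T| by apply/card_gt0P; exists u. by case: #|T| => // n _; exists n. Qed.

Lemma dist_refl (u : T) : dist e u u = 0.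
Proof. rewrite /dist; have [n ->] := card_pos u. by rewrite /= inE eqxx. Qed.

Lemma dist0 (u v : T) : dist e u v = 0 -> v = u.
Proof.
rewrite /dist; have [n ->] := card_pos u. rewrite /= inE.
by case: eqP.
Qed.

Lemma dist1 (y x : T) : e y x -> y != x -> dist e y x = 1.
Proof.
move=> hyx nyx.
have : 1 < #|T|.
  have := max_card [set y; x]. rewrite cards2 nyx. done.
rewrite /dist; case: #|T| => [|[|n]] // _.
rewrite /= !inE eq_sym (negbTE nyx) /=.
have -> : [exists z in [set y], e z x] by apply/existsP; exists y; rewrite inE eqxx.
done.
Qed.

Lemma key (S : {set T}) (u x s : T) : u \in S -> s \in S ->
  ~ set_doubly_resolves e S u x -> dist e s x = dist e s u + dist e u x.
Proof.
move=> uS sS nd.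
have h : ~ doubly_resolves e s u u x by move=> h; apply: nd; exists s, u.
move: h; rewrite /doubly_resolves dist_refl => /negP; rewrite negbK => /eqP h. lia.
Qed.

Lemma nb (S : {set T}) (u x y : T) : simple_graph e -> u \in S -> x \notin S ->
  ~ set_doubly_resolves e S u x -> y \in S -> e x y -> y = u /\ dist e u x = 1.
Proof.
move=> [sym irr] uS xS nd yS hxy.
have nyx : y != x by apply/eqP => h; move: xS; rewrite -h yS.
have nux : x != u by apply/eqP => h; move: xS; rewrite h uS.
have d1 : dist e y x = 1 by apply: dist1 => //; rewrite sym.
have k := @key S u x y uS yS nd. rewrite d1 in k.
have hux : dist e u x != 0 by apply/eqP => /dist0 /eqP; rewrite (negbTE nux).
have : dist e y u = 0 by lia.
move/dist0 => ->. split => //; lia.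
Qed.
End L.

Theorem lemma8 (T : finType) (e : rel T) (S : {set T}) (u x : T) :
  simple_graph e -> connected_graph e ->
  MLD_set e S -> u \in S -> x \notin S ->
  ~ set_doubly_resolves e S u x ->
  nbhd e x :&: S = [set u] /\
  (forall x' : T, x' \notin S -> ~ set_doubly_resolves e S u x' -> x' = x).
Proof.
move=> sg _ [res dom] uS xS nd.
have [y yS hxy] := dom x xS.
have [yu dux] := @nb T e S u _ _ sg uS xS nd yS hxy. subst y.
split.
  apply/setP => z; rewrite !inE; apply/andP/eqP.
    by case=> hz zS; have [] := @nb T e S u _ _ sg uS xS nd zS hz.
  by move=> ->.
move=> x' x'S nd'.
have [y' y'S hxy'] := dom x' x'S.
have [_ dux'] := @nb T e S u _ _ sg uS x'S nd' y'S hxy'.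
apply/eqP; apply/negPn/negP => ne.
have [s sS] := res x' x ne.
by rewrite (@key T e S u x s uS sS nd) (@key T e S u x' s uS sS nd') dux dux' eqxx.
Qed.
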